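(* Let $\delta$ be a positive integer, let $G$ be a graph on $n$ vertices with minimum degree at least $\delta$, and let $x>0$ be fixed. Define $$C_x=\frac{\ln(1+x)}{\ln(1+x)-\frac{x}{1+x}},\qquad D_x=\frac{2\ln\left(\frac{x}{1+x}\right)}{\ln(1+x)}.$$ If $$n\ge (C_x-1)\delta^2+((1-D_x)C_x+1+D_x)\delta-D_x,$$ then either $G=K_{\delta,n-\delta}$ or $P(G,x)<P(K_{\delta,n-\delta},x)$.
   Context: Graphs are simple, loopless and finite. For a graph $G$, $i_t(G)$ is the number of independent sets of size $t$ in $G$ (with $i_0(G)=1$), and the independent set polynomial is $P(G,x)=\sum_{t\ge 0} i_t(G)x^t$. $K_{a,b}$ is the complete bipartite graph with $a$ vertices in one part and $b$ in the other. *)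

(* Defs.v *)
From HB Require Import structures.
From mathcomp Require Import all_boot all_order all_algebra all_fingroup.
From mathcomp Require Import all_classical all_reals all_analysis.
Set Implicit Arguments. Unset Strict Implicit. Unset Printing Implicit Defensive.
Import Order.TTheory GRing.Theory Num.Theory.
Local Open Scope ring_scope.

(* A simple graph on vertex set 'I_n is a symmetric irreflexive relation
   e : rel 'I_n (symmetry/irreflexivity are hypotheses of the theorem). *)

Definition is_indep (n : nat) (e : rel 'I_n) (S : {set 'I_n}) : bool :=
  [forall u in S, forall v in S, ~~ e u v].

Definition indep_count (n : nat) (e : rel 'I_n) (t : nat) : nat :=
  #|[set S : {set 'I_n} | is_indep e S && (#|S| == t)%N]|.

(* P(G,x) = sum_{t>=0} i_t(G) x^t  (i_t = 0 for t > n) *)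
Definition indep_poly (R : numDomainType) (n : nat) (e : rel 'I_n) (x : R) : R :=
  \sum_(t < n.+1) (indep_count e t)%:R * x ^+ t.

Definition deg (n : nat) (e : rel 'I_n) (v : 'I_n) : nat := #|[set u | e v u]|.

Definition Kbip (n d : nat) : rel 'I_n := fun i j => (i < d)%N != (j < d)%N.

Definition graph_iso (n : nat) (e1 e2 : rel 'I_n) : Prop :=
  exists f : {perm 'I_n}, forall i j, e1 i j = e2 (f i) (f j).

Definition Cx (R : realType) (x : R) : R :=
  ln (1 + x) / (ln (1 + x) - x / (1 + x)).

Definition Dx (R : realType) (x : R) : R :=
  2 * ln (x / (1 + x)) / ln (1 + x).
Arguments Kbip n d : clear implicits.

(* Main.v *)
Require Import Defs.
From HB Require Import structures.
From mathcomp Require Import all_boot all_order all_algebra all_fingroup.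
From mathcomp Require Import all_classical all_reals all_analysis.
From mathcomp Require Import ring lra zify.
Import Order.TTheory GRing.Theory Num.Theory.
Set Implicit Arguments. Unset Strict Implicit. Unset Printing Implicit Defensive.

Section Comb.
Variable (n : nat).
Implicit Types (e : rel 'I_n) (S T W : {set 'I_n}).

Definition fam (e0 : rel 'I_n) t := [set S : {set 'I_n} | is_indep e0 S && (#|S| == t)].

Lemma is_indepP (e0 : rel 'I_n) S : reflect (forall u v, u \in S -> v \in S -> ~~ e0 u v) (is_indep e0 S).
Proof.
apply: (iffP forall_inP) => [H u v uS vS | H u uS].
  by have /forall_inP := H u uS; apply.
by apply/forall_inP => v vS; apply: H.
Qed.

Lemma indep_sub (e0 : rel 'I_n) S T : is_indep e0 S -> T \subset S -> is_indep e0 T.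
Proof.
move=> /is_indepP H /fintype.subsetP sub; apply/is_indepP => u v uT vT.
by apply: H; apply: sub.
Qed.

Lemma eq_indep (e1 e2 : rel 'I_n) S : e1 =2 e2 -> is_indep e1 S = is_indep e2 S.
Proof.
move=> E; apply/is_indepP/is_indepP => H u v uS vS; first by rewrite -E; apply: H.
by rewrite E; apply: H.
Qed.

Lemma indep_count0 (e0 : rel 'I_n) : indep_count e0 0 = 1%N.
Proof.
rewrite /indep_count (_ : [set S | _] = [set finset.set0]) ?cards1 //.
apply/setP => S; rewrite !inE cards_eq0.
case: eqP => [->|]; last by rewrite andbF.
by rewrite andbT; apply/is_indepP => u v; rewrite inE.
Qed.

Lemma double_count (e0 : rel 'I_n) t :
  (t * indep_count e0 t = \sum_v #|[set S in fam e0 t | v \in S]|)%N.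
Proof.
rewrite /indep_count -/(fam e0 t).
transitivity (\sum_(S in fam e0 t) #|S|)%N.
  rewrite (eq_bigr (fun _ => t)); first by rewrite sum_nat_const mulnC.
  by move=> S; rewrite inE => /andP[_ /eqP].
transitivity (\sum_(S in fam e0 t) \sum_v (v \in S : nat))%N.
  by apply: eq_bigr => S _; rewrite -sum1_card big_mkcond.
rewrite exchange_big /=; apply: eq_bigr => v _.
rewrite -sum1_card [LHS]big_mkcond [RHS]big_mkcond /=; apply: eq_bigr => S _.
by rewrite !inE; case: (_ && _); case: (v \in S).
Qed.
Definition Wset (e0 : rel 'I_n) v := [set u | (u != v) && ~~ e0 v u].
Definition Nset (e0 : rel 'I_n) v := [set u | e0 v u].

Lemma card_W (e0 : rel 'I_n) v : irreflexive e0 ->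
  #|Wset e0 v| = (n - (deg e0 v).+1)%N.
Proof.
move=> irr.
have -> : Wset e0 v = ~: (v |: Nset e0 v).
  by apply/setP => u; rewrite !inE negb_or.
have -> : deg e0 v = #|Nset e0 v| by [].
have vN : v \notin Nset e0 v by rewrite inE irr.
set N := Nset e0 v.
have hC := cardsC (v |: N); rewrite card_ord cardsU1 vN in hC.
lia.
Qed.

Lemma deg_lt (e0 : rel 'I_n) v : irreflexive e0 -> (deg e0 v < n)%N.
Proof.
move=> irr.
have -> : deg e0 v = #|Nset e0 v| by [].
have vN : v \notin Nset e0 v by rewrite inE irr.
set N := Nset e0 v.
have hC := cardsC (v |: N); rewrite card_ord cardsU1 vN in hC.
lia.
Qed.

Lemma star_bound (e0 : rel 'I_n) v t :
  (#|[set S in fam e0 t.+1 | v \in S]| <=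
   #|[set T : {set 'I_n} | (T \subset Wset e0 v) && is_indep e0 T && (#|T| == t)]|)%N.
Proof.
set D := [set S in _ | _].
have inj : {in D &, injective (fun S => S :\ v)}.
  move=> S1 S2; rewrite !inE => /andP[_ v1] /andP[_ v2] eq12.
  by rewrite -(finset.setD1K v1) eq12 finset.setD1K.
rewrite -(card_in_imset inj); apply: subset_leq_card.
apply/fintype.subsetP => T /imsetP [S]; rewrite !inE => /andP[/andP[iS /eqP cS] vS] ->.
have iT : is_indep e0 (S :\ v) by apply: indep_sub iS (subsetDl _ _).
rewrite iT /=; apply/andP; split.
  rewrite andbT; apply/fintype.subsetP => u; rewrite !inE => /andP[uv uS]; rewrite uv /=.
  by move/is_indepP: iS; apply.
by have := cardsD1 v S; rewrite vS cS; case=> ->.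
Qed.

Lemma W_bound (e0 : rel 'I_n) W m s : irreflexive e0 ->
  (#|W| <= m)%N -> ~~ ((#|W| == m) && is_indep e0 W) ->
  (#|[set T : {set 'I_n} | (T \subset W) && is_indep e0 T && (#|T| == s)]| <=
    2 * 'C(m.-1, s) - 'C(m.-2, s))%N.
Proof.
move=> irr Wm hW.
have hb : ('C(m.-2, s) <= 'C(m.-1, s))%N by apply: leq_bin2l; lia.
case: (ltnP #|W| m) => [lt|ge].
  have h1 : (#|[set T : {set 'I_n} | (T \subset W) && is_indep e0 T && (#|T| == s)]| <=
             #|[set T : {set 'I_n} | T \subset W & #|T| == s]|)%N.
    apply: subset_leq_card; apply/fintype.subsetP => T; rewrite !inE.
    by case/andP => /andP[-> _] ->.
  rewrite cards_draws in h1.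
  have h2 : ('C(#|W|, s) <= 'C(m.-1, s))%N by apply: leq_bin2l; lia.
  lia.
have eW : #|W| = m by apply/eqP; rewrite eqn_leq Wm ge.
rewrite eW eqxx /= in hW.
case/forall_inPn: hW => u uW /forall_inPn [w wW /negPn euw].
have uw : u != w by apply/eqP => uw; rewrite uw irr in euw.
set A := [set T : {set 'I_n} | T \subset W :\ u & #|T| == s].
set B := [set T : {set 'I_n} | T \subset W :\ w & #|T| == s].
have sub : [set T : {set 'I_n} | (T \subset W) && is_indep e0 T && (#|T| == s)] \subset A :|: B.
  apply/fintype.subsetP => T; rewrite !inE !subsetD1 => /andP[/andP[TW iT] ->].
  rewrite TW /= !andbT.
  case uT: (u \in T) => //=; apply/negP => wT.
  by move/is_indepP: iT => /(_ u w uT wT); rewrite euw.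
have eI : A :&: B = [set T : {set 'I_n} | T \subset (W :\ u) :\ w & #|T| == s].
  apply/setP => T; rewrite !inE !subsetD1.
  by case: (T \subset W); case: (u \in T); case: (w \in T); case: (#|T| == s).
have cA : #|A| = 'C(m.-1, s).
  rewrite /A cards_draws; congr 'C(_, _); have := cardsD1 u W; rewrite uW eW /=; lia.
have cB : #|B| = 'C(m.-1, s).
  rewrite /B cards_draws; congr 'C(_, _); have := cardsD1 w W; rewrite wW eW /=; lia.
have cI : #|A :&: B| = 'C(m.-2, s).
  rewrite eI cards_draws; congr 'C(_, _).
  have := cardsD1 w (W :\ u); rewrite !inE eq_sym uw wW /=.
  have := cardsD1 u W; rewrite uW eW /=; lia.
have := subset_leq_card sub; rewrite cardsU cA cB cI; lia.
Qed.
Lemma eq_fam (e1 e2 : rel 'I_n) t : e1 =2 e2 -> fam e1 t = fam e2 t.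
Proof. by move=> E; apply/setP => S; rewrite !inE (eq_indep S E). Qed.

Lemma count_perm_le (e2 : rel 'I_n) (f : {perm 'I_n}) t :
  (#|fam (fun i j => e2 (f i) (f j)) t| <= #|fam e2 t|)%N.
Proof.
have fi : injective (fun S : {set 'I_n} => f @: S) by apply: imset_inj; apply: perm_inj.
rewrite -(card_imset _ fi); apply: subset_leq_card.
apply/fintype.subsetP => S' /imsetP [S]; rewrite !inE => /andP[iS cS] ->.
rewrite card_imset; last exact: perm_inj.
rewrite cS andbT; apply/is_indepP => a b /imsetP[a' a'S ->] /imsetP[b' b'S ->].
by move/is_indepP: iS => /(_ a' b' a'S b'S).
Qed.

Lemma count_perm (e2 : rel 'I_n) (f : {perm 'I_n}) t :
  indep_count (fun i j => e2 (f i) (f j)) t = indep_count e2 t.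
Proof.
apply/eqP; rewrite eqn_leq; apply/andP; split; first exact: count_perm_le.
have := count_perm_le (fun i j => e2 (f i) (f j)) f^-1 t.
by rewrite (@eq_fam _ e2) // => i j; rewrite !permKV.
Qed.

Lemma count_mono (e1 e2 : rel 'I_n) t : (forall i j, e2 i j -> e1 i j) ->
  (indep_count e1 t <= indep_count e2 t)%N.
Proof.
move=> H; apply: subset_leq_card; apply/fintype.subsetP => S; rewrite !inE.
case/andP => iS ->; rewrite andbT; apply/is_indepP => a b aS bS.
by apply/negP => /H; move/is_indepP: iS => /(_ a b aS bS) /negP.
Qed.

Lemma card_lt_set d : (d <= n)%N -> #|[set i : 'I_n | (i < d)%N]| = d.
Proof.
move=> hd.
have -> : [set i : 'I_n | (i < d)%N] = [set widen_ord hd j | j in 'I_d].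
  apply/setP => i; rewrite inE; apply/idP/imsetP => [lt | [j _ ->]].
    by exists (Ordinal lt) => //; apply: val_inj.
  exact: ltn_ord j.
rewrite card_imset ?card_ord //.
by move=> a b /(congr1 val) /= /val_inj.
Qed.

Lemma Kbip_count d t : (d <= n)%N -> (0 < t)%N ->
  ('C(n - d, t) + 'C(d, t) <= indep_count (Kbip n d) t)%N.
Proof.
move=> hd ht.
set A := [set i : 'I_n | (i < d)%N].
have cA : #|A| = d by apply: card_lt_set.
have cB : #|~: A| = (n - d)%N by have := cardsC A; rewrite card_ord cA; lia.
set FA := [set S : {set 'I_n} | S \subset A & #|S| == t].
set FB := [set S : {set 'I_n} | S \subset ~: A & #|S| == t].
have hI : FA :&: FB = finset.set0.
  apply/setP => S; rewrite !inE; apply/negP => /andP[/andP[SA cS] /andP[SB _]].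
  have : S = finset.set0.
    apply/setP => i; rewrite inE; apply/negP => iS.
    by move: (fintype.subsetP SA i iS) (fintype.subsetP SB i iS); rewrite /A !inE => ->.
  by move=> S0; move: cS; rewrite S0 cards0 => /eqP t0; rewrite -t0 in ht.
have sub : FA :|: FB \subset fam (Kbip n d) t.
  apply/fintype.subsetP => S; rewrite !inE => /orP[] /andP[sS ->]; rewrite andbT;
  apply/is_indepP => a b aS bS; rewrite /Kbip.
    by move: (fintype.subsetP sS a aS) (fintype.subsetP sS b bS); rewrite /A !inE => -> ->.
  by move: (fintype.subsetP sS a aS) (fintype.subsetP sS b bS); rewrite /A !inE => /negbTE -> /negbTE ->.
have := subset_leq_card sub; rewrite cardsU hI cards0 subn0 /FA /FB !cards_draws cA cB.
by rewrite addnC.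
Qed.

Lemma exists_perm (R : {set 'I_n}) :
  exists f : {perm 'I_n}, forall i, (f i < #|R|)%N = (i \in R).
Proof.
set r := enum R ++ enum (~: R).
have sr : size r = n by rewrite size_cat -!cardE; have := cardsC R; rewrite card_ord.
have memr : forall i, i \in r by move=> i; rewrite mem_cat !mem_enum inE; case: (i \in R).
have hr : forall i, (index i r < n)%N by move=> i; have := index_mem i r; rewrite memr sr.
pose h i := Ordinal (hr i).
have inj : injective h.
  move=> i j /(congr1 val) /= eij.
  by rewrite -(nth_index i (memr i)) eij (nth_index i (memr j)).
exists (perm inj) => i; rewrite permE /= /r index_cat mem_enum.
case: (boolP (i \in R)) => iR.
  by rewrite cardE -(mem_enum R) in iR *; rewrite index_mem.
by rewrite -cardE ltnNge leq_addr.
Qed.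
Lemma caseA (e : rel 'I_n) d v : symmetric e -> irreflexive e ->
  (forall u, (d <= deg e u)%N) ->
  #|Wset e v| = (n - d.+1)%N -> is_indep e (Wset e v) ->
  graph_iso e (Kbip n d) \/
  ((forall t, (indep_count e t <= indep_count (Kbip n d) t)%N) /\
   (indep_count e 2 < indep_count (Kbip n d) 2)%N).
Proof.
move=> sym irr hmin cW iW.
have dv : deg e v = d.
  have := card_W v irr; have := deg_lt v irr; have := hmin v; lia.
set R := Nset e v.
have cR : #|R| = d by [].
have notR : forall u, u \notin R -> (u == v) || (u \in Wset e v).
  by move=> u; rewrite !inE; case: eqP.
have indepI : forall u w, u \notin R -> w \notin R -> ~~ e u w.
  move=> u w uR wR; case/orP: (notR u uR) => [/eqP ->|uW].
    by move: wR; rewrite inE.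
  case/orP: (notR w wR) => [/eqP ->|wW].
    by rewrite sym; move: uR; rewrite inE.
  by move/is_indepP: iW; apply.
have NuR : forall u w, u \notin R -> w \in R -> e u w.
  move=> u w uR wR.
  have sub : Nset e u \subset R.
    apply/fintype.subsetP => z; rewrite inE => euz; apply/negPn/negP => zR.
    by move: (indepI u z uR zR); rewrite euz.
  have : Nset e u == R by rewrite eqEcard sub cR; apply: hmin.
  by move/eqP => E; rewrite -E inE in wR.
have [f hf] := exists_perm R.
rewrite cR in hf.
have key : forall i j, ~~ ((i \in R) && (j \in R)) -> e i j = Kbip n d (f i) (f j).
  move=> i j; rewrite /Kbip !hf.
  case iR: (i \in R); case jR: (j \in R) => //= _.
  - by rewrite sym; apply: NuR; rewrite ?jR.
  - by apply: NuR; rewrite ?iR.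
  - by apply/negbTE/indepI; rewrite ?iR ?jR.
case: (boolP (is_indep e R)) => iR.
  left; exists f => i j.
  case ij: ((i \in R) && (j \in R)); last by apply: key; rewrite ij.
  case/andP: ij => iR' jR'; rewrite /Kbip !hf iR' jR' /=.
  by apply/negbTE; move/is_indepP: iR; apply.
right.
have mono : forall i j, Kbip n d (f i) (f j) -> e i j.
  move=> i j; case ij: ((i \in R) && (j \in R)).
    by case/andP: ij => iR' jR'; rewrite /Kbip !hf iR' jR'.
  by rewrite key ?ij.
split.
  by move=> t; rewrite -(count_perm (Kbip n d) f); apply: count_mono.
rewrite -(count_perm (Kbip n d) f).
case/forall_inPn: iR => u uR /forall_inPn [w wR /negPn euw].
have uw : u != w by apply/eqP => uw; rewrite uw irr in euw.
apply: proper_card; apply/fintype.properP; split.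
  apply/fintype.subsetP => S; rewrite !inE; case/andP => iS ->; rewrite andbT.
  apply/is_indepP => a b aS bS; apply/negP => /mono.
  by move/is_indepP: iS => /(_ a b aS bS) /negP.
exists [set u; w].
  rewrite !inE cards2 uw /= andbT; apply/is_indepP => a b.
  rewrite !inE => /orP[] /eqP -> /orP[] /eqP ->; rewrite /Kbip !hf ?uR ?wR //.
rewrite !inE; apply/negP => /andP[/is_indepP H _].
by move: (H u w); rewrite !inE !eqxx orbT euw => /(_ isT isT).
Qed.
Lemma caseB (e : rel 'I_n) d t : irreflexive e ->
  (forall u, (d <= deg e u)%N) ->
  (forall v, ~~ ((#|Wset e v| == (n - d.+1)%N) && is_indep e (Wset e v))) ->
  (t.+1 * indep_count e t.+1 <=
     n * (2 * 'C((n - d.+1).-1, t) - 'C((n - d.+1).-2, t)))%N.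
Proof.
move=> irr hmin hB; rewrite double_count.
apply: (@leq_trans (\sum_(v : 'I_n) (2 * 'C((n - d.+1).-1, t) - 'C((n - d.+1).-2, t)))%N).
  apply: leq_sum => v _.
  apply: leq_trans (star_bound e v t) _; apply: W_bound => //.
  by rewrite card_W //; have := hmin v; lia.
by rewrite sum_nat_const card_ord.
Qed.
End Comb.

Local Open Scope ring_scope.
Section Real.
Variable R : realType.

Lemma lt_ln1Dx (y : R) : -1 < y -> y != 0 -> ln (1 + y) < y.
Proof.
move=> hy y0; rewrite -ltr_expR lnK ?expR_gt1Dx //.
by rewrite posrE addrC -ltrBlDr sub0r.
Qed.

Lemma analytic (x : R) : 0 < x ->
  1 <= (Cx x - 1) * x /\ 2 <= - Dx x * x * (1 + x).
Proof.
move=> hx.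
set L := ln (1 + x); set q := x / (1 + x).
have h1x : 0 < 1 + x by lra.
have hL0 : 0 < L by apply: ln_gt0; lra.
have hLx : L <= x by apply: le_ln1Dx; lra.
have q0 : 0 < q by apply: divr_gt0.
have q1 : q < 1 by rewrite /q ltr_pdivrMr //; lra.
have hq1 : 1 - q = (1 + x)^-1 by rewrite /q; field; lra.
have hqL : q < L.
  have hq0 : - q != 0 by rewrite oppr_eq0 gt_eqF.
  have := @lt_ln1Dx (- q) (ltac:(lra)) hq0.
  rewrite (_ : 1 + - q = (1 + x)^-1); last by rewrite -hq1.
  rewrite lnV ?posrE // -/L; lra.
have hqx : q * (1 + x) = x by rewrite /q mulfVK // gt_eqF.
have hlq : ln q <= q - 1.
  have := @le_ln1Dx R (q - 1) (ltac:(lra)).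
  by rewrite (_ : 1 + (q - 1) = q) //; ring.
set l := ln q in hlq.
split.
  rewrite /Cx -/L -/q.
  have hLq : 0 < L - q by lra.
  rewrite (_ : L / (L - q) - 1 = q / (L - q)); last by field; lra.
  rewrite mulrAC ler_pdivlMr // mul1r; nra.
rewrite /Dx -/L -/q -/l.
rewrite (_ : - (2 * l / L) * x * (1 + x) = (2 * (- l) * x * (1 + x)) / L); last by field; lra.
rewrite ler_pdivlMr //.
have h2 : (- l - (1 - q)) * (x * (1 + x)) >= 0 by apply: mulr_ge0; nra.
nra.
Qed.
Lemma bernoulli (x : R) k : 0 <= x -> 1 + k%:R * x <= (1 + x) ^+ k.
Proof.
move=> hx; elim: k => [|k IH]; first by rewrite mul0r addr0 expr0.
rewrite exprS -natr1.
have h : 0 <= k%:R * x by apply: mulr_ge0.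
nra.
Qed.

Lemma K_nonneg (x m : R) (d : nat) : 0 < x -> 2 <= m -> (1 <= d)%N ->
  ((2 <= d)%N -> 2 * x * (d%:R + 1) + d%:R <= x ^+ 2 * m) ->
  (d = 1%N -> 2 * x + 2 <= x ^+ 2 * m) ->
  0 <= m * (m - 1) * (1 + x) ^+ 2 - (m + d%:R + 1) * (2 * (1 + x) * (m - 1) - m).
Proof.
move=> hx hm hd h2 h1.
case: (ltnP 1 d) => hd2.
  have := h2 hd2; set dd := d%:R => H.
  have hdd : 2 <= dd by rewrite /dd (ler_nat R 2 d).
  have hp : 0 <= (m - 1) * (x ^+ 2 * m - 2 * x * (dd + 1) - dd) by apply: mulr_ge0; lra.
  have -> : m * (m - 1) * (1 + x) ^+ 2 - (m + dd + 1) * (2 * (1 + x) * (m - 1) - m)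
     = (m - 1) * (x ^+ 2 * m - 2 * x * (dd + 1) - dd) + dd + 2 by ring.
  lra.
have d1 : d = 1%N by lia.
have H := h1 d1; rewrite d1.
have -> : m * (m - 1) * (1 + x) ^+ 2 - (m + 1%:R + 1) * (2 * (1 + x) * (m - 1) - m)
    = x ^+ 2 * m ^+ 2 - (x ^+ 2 + 4 * x + 1) * m + 4 * x + 4 by rewrite /=; ring.
case: (lerP (x ^+ 2) 3) => hx3.
  set s := x ^+ 2 * m - 2 * x - 2.
  have hs : 0 <= s by rewrite /s; lra.
  have e : x ^+ 2 * (x ^+ 2 * m ^+ 2 - (x ^+ 2 + 4 * x + 1) * m + 4 * x + 4)
     = s ^+ 2 + s * (3 - x ^+ 2) + 2 * (x - 1) ^+ 2 * (x + 1) by rewrite /s; ring.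
  have p1 : 0 <= s * (3 - x ^+ 2) by apply: mulr_ge0; lra.
  have p2 : 0 <= 2 * (x - 1) ^+ 2 * (x + 1) by apply: mulr_ge0; [apply: mulr_ge0; [lra| apply: sqr_ge0] | lra].
  have p3 : 0 <= s ^+ 2 by apply: sqr_ge0.
  have hx2 : 0 < x ^+ 2 by apply: exprn_gt0.
  rewrite -(pmulr_rge0 _ hx2) e; lra.
have hq : 0 <= 3 * x ^+ 2 - 4 * x - 1.
  have : 8 < 5 * x by nra.
  nra.
have -> : x ^+ 2 * m ^+ 2 - (x ^+ 2 + 4 * x + 1) * m + 4 * x + 4
   = 2 * (x - 1) ^+ 2 + (m - 2) * (3 * x ^+ 2 - 4 * x - 1) + x ^+ 2 * (m - 2) ^+ 2 by ring.
have p1 : 0 <= (m - 2) * (3 * x ^+ 2 - 4 * x - 1) by apply: mulr_ge0; lra.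
have p2 : 0 <= x ^+ 2 * (m - 2) ^+ 2 by apply: mulr_ge0; apply: sqr_ge0.
have p3 : 0 <= (x - 1) ^+ 2 by apply: sqr_ge0.
lra.
Qed.
Lemma cons (x c1 E M : R) (d : nat) : 0 < x -> 1 <= c1 * x -> 2 <= E * x * (1 + x) ->
  (1 <= d)%N ->
  c1 * d%:R ^+ 2 + (c1 + 2) * d%:R + E * (c1 * d%:R + 1) <= M + d%:R + 1 ->
  [/\ d%:R - 1 < M, ((2 <= d)%N -> 2 * x * (d%:R + 1) + d%:R <= x ^+ 2 * M),
     (d = 1%N -> 2 * x + 2 <= x ^+ 2 * M),
     (M = 2 -> 1 < d%:R * x) & (M = 3 -> 0 < 6 * d%:R * x + d%:R - 2)].
Proof.
move=> hx hc hE hd1 hT.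
set dd := d%:R in hT *.
have hdd : 1 <= dd by rewrite /dd (ler_nat R 1 d).
have c0 : 0 < c1 by nra.
have E0 : 0 < E.
  have : 0 < x * (1 + x) by apply: mulr_gt0; lra.
  nra.
have hcd : 0 <= c1 * dd ^+ 2 + c1 * dd.
  have h0 : 0 <= c1 * dd by apply: mulr_ge0; lra.
  have : 0 <= c1 * dd * dd by apply: mulr_ge0; lra.
  nra.
have hEp : 0 < E * (c1 * dd + 1) by apply: mulr_gt0 => //; nra.
have hA : dd * (dd + 1) <= c1 * x * (dd * (dd + 1)).
  have : 0 <= (c1 * x - 1) * (dd * (dd + 1)) by apply: mulr_ge0; nra.
  lra.
split.
- nra.
- move=> hd2; have hdd2 : 2 <= dd by rewrite /dd (ler_nat R 2 d).
  have hx1 : 0 < 1 + x by lra.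
  have h1 : x * dd ^+ 2 <= x ^+ 2 * c1 * dd ^+ 2.
    have : 0 <= (c1 * x - 1) * (x * dd ^+ 2) by apply: mulr_ge0; nra.
    nra.
  have h2 : x * dd <= x ^+ 2 * c1 * dd.
    have : 0 <= (c1 * x - 1) * (x * dd) by apply: mulr_ge0; nra.
    nra.
  have h3 : x * E * (dd + x) <= x ^+ 2 * E * (c1 * dd + 1).
    have : 0 <= (c1 * x - 1) * (x * E * dd) by apply: mulr_ge0; nra.
    nra.
  have h4 : 2 * (dd + x) <= x * E * (dd + x) * (1 + x).
    have : 0 <= (E * x * (1 + x) - 2) * (dd + x) by apply: mulr_ge0; lra.
    nra.
  have hM : x * dd ^+ 2 + x * dd + x ^+ 2 * (dd - 1) + x * E * (dd + x) <= x ^+ 2 * M.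
    have : x ^+ 2 * (c1 * dd ^+ 2 + (c1 + 2) * dd + E * (c1 * dd + 1)) <= x ^+ 2 * (M + dd + 1).
      by apply: ler_wpM2l => //; apply: exprn_ge0; lra.
    nra.
  have hP : (1 + x) * (2 * x * (dd + 1) + dd) <=
            (1 + x) * (x * dd ^+ 2 + x * dd + x ^+ 2 * (dd - 1)) + 2 * (dd + x).
    have q1 : 0 <= x * (dd - 2) * ((dd + 1) * (1 + x) - 1) by
      apply: mulr_ge0; [apply: mulr_ge0; lra | nra].
    have q2 : 0 <= x ^+ 2 * (dd - 1) * (1 + x) by
      apply: mulr_ge0; [apply: mulr_ge0; [apply: exprn_ge0; lra | lra] | lra].
    nra.
  have : (1 + x) * (2 * x * (dd + 1) + dd) <= (1 + x) * (x ^+ 2 * M) by nra.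
  by rewrite ler_pM2l.
- move=> d1; rewrite /dd d1 /= in hT *.
  have h3 : x * E * (1 + x) <= x ^+ 2 * E * (c1 + 1).
    have : 0 <= (c1 * x - 1) * (x * E) by apply: mulr_ge0; nra.
    nra.
  have : x ^+ 2 * (c1 * 1 ^+ 2 + (c1 + 2) * 1 + E * (c1 * 1 + 1)) <= x ^+ 2 * (M + 1 + 1).
    by apply: ler_wpM2l => //; apply: exprn_ge0; lra.
  nra.
- move=> M2; rewrite M2 in hT.
  have : dd * (dd + 1) < (3 - dd) * x by nra.
  nra.
- move=> M3; rewrite M3 in hT.
  have : dd * (dd + 1) < (4 - dd) * x by nra.
  nra.
Qed.
Lemma final_main (x A B S1 S2 M dd : R) : 0 < x -> 2 <= M -> 1 <= A ->
  M * S1 = (1 + x) * A - 1 -> (M - 1) * S2 = A - 1 ->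
  0 <= M * (M - 1) * (1 + x) ^+ 2 - (M + dd + 1) * (2 * (1 + x) * (M - 1) - M) ->
  0 < M * (M - 1) * (B - 2) + (M + dd + 1) * (M - 2) ->
  1 + (M + dd + 1) * (2 * S1 - S2) < (1 + x) ^+ 2 * A + B - 1.
Proof.
move=> hx hM hA h1 h2 hK hQ.
have M0 : M != 0 by apply/eqP; lra.
have M1 : M - 1 != 0 by apply/eqP; lra.
have e1 : S1 = ((1 + x) * A - 1) / M by rewrite -h1 [M * S1]mulrC mulfK.
have e2 : S2 = (A - 1) / (M - 1) by rewrite -h2 [(M - 1) * S2]mulrC mulfK.
set K := M * (M - 1) * (1 + x) ^+ 2 - (M + dd + 1) * (2 * (1 + x) * (M - 1) - M) in hK.
set Q := M * (M - 1) * (B - 2) + (M + dd + 1) * (M - 2) in hQ.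
have e : (1 + x) ^+ 2 * A + B - 1 - (1 + (M + dd + 1) * (2 * S1 - S2))
       = (A * K + Q) / (M * (M - 1)).
  rewrite e1 e2 /K /Q; field; apply/andP; split => //.
have hMM : 0 < M * (M - 1) by apply: mulr_gt0; lra.
have hAK : 0 <= A * K by apply: mulr_ge0; lra.
have : 0 < (A * K + Q) / (M * (M - 1)) by apply: divr_gt0; lra.
rewrite -e; lra.
Qed.

Lemma Q_pos (x B : R) (m d : nat) : 0 < x -> (2 <= m)%N -> (1 <= d)%N ->
  1 + d%:R * x <= B ->
  (m = 2%N -> 1 < d%:R * x) -> (m = 3%N -> 0 < 6 * d%:R * x + d%:R - 2) ->
  0 < m%:R * (m%:R - 1) * (B - 2) + (m%:R + d%:R + 1) * (m%:R - 2).
Proof.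
move=> hx hm hd hB h2 h3.
have hdd : 1 <= d%:R :> R by rewrite (ler_nat R 1 d).
have hdx : 0 < d%:R * x by apply: mulr_gt0; lra.
case: (ltnP m 4) => hm4.
  have [em|em] : m = 2%N \/ m = 3%N by lia.
    by have := h2 em; rewrite em /=; nra.
  by have := h3 em; rewrite em /=; nra.
have hM : 4 <= m%:R :> R by rewrite (ler_nat R 4 m).
have p : 0 < m%:R * (m%:R - 1) * (d%:R * x) :> R by apply: mulr_gt0 => //; nra.
have p2 : 0 <= m%:R * (m%:R - 1) * (B - 1 - d%:R * x) :> R.
  by apply: mulr_ge0; [nra | lra].
have p3 : 0 <= (d%:R - 1) * (m%:R - 2) :> R by apply: mulr_ge0; lra.
nra.
Qed.

Lemma binsum (x : R) N k : (k <= N)%N ->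
  \sum_(t < N.+1) 'C(k, t)%:R * x ^+ t = (1 + x) ^+ k.
Proof.
move=> hk; rewrite addrC exprD1n.
rewrite (big_ord_widen N.+1 (fun i => x ^+ i *+ 'C(k, i))) // big_mkcond /=.
rewrite [RHS]big_mkcond /=; apply: eq_bigr => i _; case: ltnP => h; first by rewrite mulr_natl.
by rewrite bin_small // mul0r.
Qed.

Lemma S_eq (x : R) N k : (k <= N)%N ->
  k%:R * \sum_(t < N) 'C(k.-1, t)%:R * x ^+ t.+1 / t.+1%:R = (1 + x) ^+ k - 1.
Proof.
move=> hk; rewrite -(binsum x hk) big_ord_recl /= bin0 expr0 mulr1 [1 + _]addrC addrK.
rewrite mulr_sumr; apply: eq_bigr => t _.
rewrite /bump /= add1n.
rewrite mulrA mulrA -natrM mul_bin_diag natrM -mulrA mulrAC mulrC.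
by congr (_ * _); rewrite mulrC divfK // pnatr_eq0.
Qed.
End Real.

Section Main.
Variable R : realType.

Lemma sum_lt N (F G : 'I_N -> R) (i0 : 'I_N) :
  (forall i, F i <= G i) -> F i0 < G i0 -> \sum_(i < N) F i < \sum_(i < N) G i.
Proof.
move=> hle hlt; rewrite (bigD1 i0) //= [X in _ < X](bigD1 i0) //=.
by apply: ltr_leD => //; apply: ler_sum => i _.
Qed.

Lemma binsum1 (x : R) N k : (k <= N)%N ->
  \sum_(t < N) 'C(k, t.+1)%:R * x ^+ t.+1 = (1 + x) ^+ k - 1.
Proof.
move=> hk; rewrite -(binsum x hk) big_ord_recl /= bin0 expr0 mulr1 [1 + _]addrC addrK.
by apply: eq_bigr => t _.
Qed.

Lemma PK_lower (x : R) n d : 0 < x -> (d <= n)%N ->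
  (1 + x) ^+ (n - d) + (1 + x) ^+ d - 1 <= indep_poly (Kbip n d) x.
Proof.
move=> hx hd; rewrite /indep_poly big_ord_recl indep_count0 expr0 mulr1.
have e1 := binsum1 x (leq_subr d n); have e2 := binsum1 x hd.
have : 1 + \sum_(t < n) ('C(n - d, t.+1) + 'C(d, t.+1))%:R * x ^+ t.+1 <=
       1 + \sum_(i < n) (indep_count (Kbip n d) (bump 0 i))%:R * x ^+ bump 0 i.
  rewrite lerD2l; apply: ler_sum => t _; apply: ler_wpM2r; first by apply: exprn_ge0; lra.
  by rewrite ler_nat /bump /=; apply: Kbip_count.
suff -> : \sum_(t < n) ('C(n - d, t.+1) + 'C(d, t.+1))%:R * x ^+ t.+1 =
   (1 + x) ^+ (n - d) - 1 + ((1 + x) ^+ d - 1).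
  by move=> h; apply: le_trans h; lra.
by rewrite -e1 -e2 -big_split /=; apply: eq_bigr => t _; rewrite natrD mulrDl.
Qed.
Definition Ssum (x : R) N k := \sum_(t < N) 'C(k.-1, t)%:R * x ^+ t.+1 / t.+1%:R.

Lemma PG_upper (x : R) n (e : rel 'I_n) d : 0 < x -> irreflexive e ->
  (forall u, (d <= deg e u)%N) ->
  (forall v, ~~ ((#|Wset e v| == (n - d.+1)%N) && is_indep e (Wset e v))) ->
  indep_poly e x <= 1 + n%:R * (2 * Ssum x n (n - d.+1) - Ssum x n (n - d.+1).-1).
Proof.
move=> hx irr hmin hB.
set m := (n - d.+1)%N.
rewrite /indep_poly big_ord_recl indep_count0 expr0 mulr1 lerD2l /Ssum.
rewrite mulrBr mulrA !mulr_sumr -sumrB; apply: ler_sum => t _.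
rewrite /bump /=.
have H := caseB t irr hmin hB; rewrite -/m in H.
have hb : ('C(m.-2, t) <= 2 * 'C(m.-1, t))%N.
  have := @leq_bin2l m.-2 m.-1 t; lia.
have Hr : t.+1%:R * (indep_count e t.+1)%:R <=
          n%:R * (2 * 'C(m.-1, t)%:R - 'C(m.-2, t)%:R) :> R.
  by move: H; rewrite -(ler_nat R) !natrM natrB // natrM.
have ht : 0 < t.+1%:R :> R by rewrite ltr0n.
have hxt : 0 <= x ^+ t.+1 by apply: exprn_ge0; lra.
rewrite (_ : n%:R * 2 * ('C(m.-1, t)%:R * x ^+ t.+1 / t.+1%:R) -
             n%:R * ('C(m.-2, t)%:R * x ^+ t.+1 / t.+1%:R)
          = n%:R * (2 * 'C(m.-1, t)%:R - 'C(m.-2, t)%:R) / t.+1%:R * x ^+ t.+1);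
  last by field; rewrite gt_eqF.
apply: ler_wpM2r => //; rewrite ler_pdivlMr // mulrC //.
Qed.
End Main.

Unset Implicit Arguments. Set Strict Implicit.
Local Open Scope ring_scope.
Theorem mainTheorem5 (R : realType) (n delta : nat) (e : rel 'I_n)
  (esym : symmetric e) (eirr : irreflexive e)
  (hdelta : (0 < delta)%N)
  (hmindeg : forall v : 'I_n, (delta <= deg e v)%N)
  (x : R) (hx : 0 < x)
  (hn : (Cx x - 1) * delta%:R ^+ 2
        + ((1 - Dx x) * Cx x + 1 + Dx x) * delta%:R - Dx x <= n%:R) :
  graph_iso e (@Kbip n delta) \/ indep_poly e x < indep_poly (@Kbip n delta) x.
Proof.
have [hC hE] := analytic hx.
set c1 := Cx x - 1 in hC; set E := - Dx x in hE.
have hT : c1 * delta%:R ^+ 2 + (c1 + 2) * delta%:R + E * (c1 * delta%:R + 1)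
          <= (n%:R - delta%:R - 1) + delta%:R + 1.
  have -> : n%:R - delta%:R - 1 + delta%:R + 1 = n%:R :> R by ring.
  by move: hn; rewrite /c1 /E; congr (_ <= _); ring.
have [ha hb hc hd he] := cons hx hC hE hdelta hT.
have h2n : (delta.*2 < n)%N.
  by rewrite -(ltr_nat R) -muln2 natrM; lra.
set m := (n - delta.+1)%N.
have hdn1 : (delta.+1 <= n)%N by clear -h2n; rewrite -addnn in h2n; lia.
have hmd : (delta <= m)%N by rewrite /m; clear -h2n; rewrite -addnn in h2n; lia.
have hnm : (n - delta)%N = m.+1 by rewrite /m; clear -h2n; rewrite -addnn in h2n; lia.
have hdn : (delta <= n)%N by apply: ltnW.
have hmR : m%:R = n%:R - delta%:R - 1 :> R.
  by rewrite /m natrB // -addn1 natrD; ring.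
rewrite -hmR in hb hc hd he.
case: (boolP [exists v, (#|Wset e v| == m) && is_indep e (Wset e v)]).
  case/existsP => v /andP[/eqP cW iW].
  case: (caseA esym eirr hmindeg cW iW) => [iso|[hle hlt]]; first by left.
  right; rewrite /indep_poly.
  have h2 : (2 < n.+1)%N by clear -h2n hdelta; rewrite -addnn in h2n; lia.
  apply: (@sum_lt R _ (fun i : 'I_n.+1 => (indep_count e i)%:R * x ^+ i) (fun i : 'I_n.+1 => (indep_count (Kbip n delta) i)%:R * x ^+ i) (Ordinal h2)) => [i|] /=.
    by apply: ler_wpM2r; [apply: exprn_ge0; lra | rewrite ler_nat].
  by rewrite ltr_pM2r ?ltr_nat // exprn_gt0.
move=> hB; right.
have hB' : forall v, ~~ ((#|Wset e v| == (n - delta.+1)%N) && is_indep e (Wset e v)).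
  by move=> v; apply/negP => H; move/negP: hB; apply; apply/existsP; exists v.
have hup := PG_upper hx eirr hmindeg hB'; rewrite -/m in hup.
have hlow' := PK_lower hx hdn; rewrite hnm in hlow'.
apply: le_lt_trans hup _; apply: lt_le_trans _ hlow'.
have hmn : (m <= n)%N by rewrite /m leq_subr.
have hS1 := S_eq x hmn.
have hS2 := S_eq x (leq_trans (leq_pred m) hmn).
rewrite -/(Ssum x n m) -/(Ssum x n m.-1) in hS1 hS2.
have hnR : n%:R = m%:R + delta%:R + 1 :> R by rewrite hmR; ring.
rewrite hnR.
case: (ltnP m 2) => hm2.
  have m1 : m = 1%N by clear -hm2 hmd hdelta; lia.
  have d1 : delta = 1%N by clear -hm2 hmd hdelta; lia.
  rewrite m1 /= in hS1 *; rewrite d1.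
  rewrite (_ : Ssum x n 0 = Ssum x n 1) //.
  rewrite mul1r in hS1; rewrite hS1 expr1.
  have : 0 < x ^+ 2 by apply: exprn_gt0.
  rewrite expr2 => h; nra.
have hA : 1 <= (1 + x) ^+ m.-1 by apply: exprn_ege1; lra.
have hm0 : (0 < m)%N by apply: leq_trans _ hm2.
have em : (1 + x) ^+ m = (1 + x) * (1 + x) ^+ m.-1 by rewrite -exprS prednK.
have em1 : (1 + x) ^+ m.+1 = (1 + x) ^+ 2 * (1 + x) ^+ m.-1 by rewrite -exprD add2n prednK.
rewrite em1.
have hm1R : (m.-1)%:R = m%:R - 1 :> R by rewrite -subn1 natrB.
rewrite hm1R in hS2.
rewrite em in hS1.
apply: final_main => //.
- by rewrite (ler_nat R 2 m).
- apply: K_nonneg => //; first by rewrite (ler_nat R 2 m).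
- apply: (@Q_pos R x) => //.
  + by apply: bernoulli; lra.
  + by move=> m2; apply: hd; rewrite m2.
  + by move=> m3; apply: he; rewrite m3.
Qed.
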